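(* Let $\mathcal{I}(X,\mathcal{R})$ be an index coding problem with messages $X=\{x_1,\dots,x_m\}$, each in $\mathbb{F}_q^n$, and receivers $R_i=(x_{f(i)},H_i)\in\mathcal{R}$, each with a prescribed error-correcting capability $\delta_i\in\mathbb{Z}_{\ge0}$ satisfying $2\delta_i\le c$. Then there exists a vector linear differential error correcting index code over $\mathbb{F}_q$ of length $c$ and dimension $n$ for this problem (with capabilities $\delta_i$) if and only if there exists a discrete polymatroid $\mathbb{D}$ on the ground set $\{1,\dots,m+2c\}$, representable over $\mathbb{F}_q$, with rank function $r$ and $r(\{1,\dots,m+2c\})=mn+c$, satisfying: (A) $r(\{j\})=n$ for all $j\in\{1,\dots,m\}$; $r(\{1,\dots,m+c\})=mn+c$; and $r(\{m+j\})=1$ for all $j\in\{1,\dots,2c\}$; (B) for every $j\in\{1,\dots,c\}$: $r(\{1,\dots,m\}\cup\{m+j,m+c+j\})=r(\{1,\dots,m\}\cup\{m+j\})=r(\{1,\dots,m\}\cup\{m+c+j\})$; (C) for every receiver $R_i=(x_{f(i)},H_i)$ and every set $\mathcal{F}=\{i_1,\dots,i_{2\delta_i}\}\subseteq\{1,\dots,c\}$ with $|\mathcal{F}|=2\delta_i$, setting $$T_{\mathcal{F},i}=\{1,\dots,m+c\}\setminus\big(\overline{H_i}\cup\{m+i_1,\dots,m+i_{2\delta_i}\}\big),\qquad \mathbb{D}_{\mathcal{F},i}=\mathbb{D}/T_{\mathcal{F},i},$$ one has $r_{\mathbb{D}_{\mathcal{F},i}}(\{f(i)\}\cup S)=r_{\mathbb{D}_{\mathcal{F},i}}(S)$,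 where $S=\{m+c+1,\dots,m+2c\}$ and $\overline{H_i}=\{1,\dots,m\}\setminus\{j: x_j\in H_i\}$.
   Context: Index coding problem: messages $x_1,\dots,x_m\in\mathbb{F}_q^n$ (row vectors), $y=[x_1\ \cdots\ x_m]\in\mathbb{F}_q^{mn}$; each receiver $R_i=(x_{f(i)},H_i)$ demands $x_{f(i)}$ and knows side information $H_i\subseteq X\setminus\{x_{f(i)}\}$. A differential error correcting index code of length $c$ and dimension $n$ is a map $\mathfrak{C}:\mathbb{F}_q^{mn}\to\mathbb{F}_q^c$ such that for each receiver $R_i$ there is a decoding function $\psi_{R_i}$ with $\psi_{R_i}(\mathfrak{C}(y)+\epsilon_i,H_i)=x_{f(i)}$ for all $y\in\mathbb{F}_q^{mn}$ and all $\epsilon_i\in\mathbb{F}_q^c$ of Hamming weight at most $\delta_i$. It is vector linear if $\mathfrak{C}(y)=yL$ for some $mn\times c$ matrix $L$ over $\mathbb{F}_q$. Discrete polymatroid: a nonempty finite $\mathbb{D}\subseteq\mathbb{Z}_{\ge0}^N$ closed under taking componentwise-smaller nonnegative integer vectors and such that for $u,v\in\mathbb{D}$ with $|u|<|v|$ there is $w\in\mathbb{D}$ with $u<w\le u\vee v$; its rank function is $r(A)=\max\{\sum_{j\in A}u_j:u\in\mathbb{D}\}$, $r(\emptyset)=0$, and it determines $\mathbb{D}$. $\mathbb{D}$ is representable over $\mathbb{F}_q$ if there are subspaces $V_1,\dots,V_N$ of an $\mathbb{F}_q$-vector space with $\dim(\sum_{j\in A}V_j)=r(A)$ for all $A$.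 For $T$ a subset of the ground set $E$, the contraction $\mathbb{D}/T$ has ground set $E\setminus T$ and rank function $r_{\mathbb{D}/T}(A)=r(A\cup T)-r(T)$. *)

(* Defs.v *)
From HB Require Import structures.
From mathcomp Require Import all_boot all_order all_algebra all_fingroup all_field.
Set Implicit Arguments. Unset Strict Implicit. Unset Printing Implicit Defensive.
Import GRing.Theory.
Local Open Scope ring_scope.

Definition hweight (F : fieldType) (c : nat) (e : 'rV[F]_c) : nat :=
  #|[set j : 'I_c | e 0 j != 0]|.

(* The message vector y = [x_1 ... x_m] in F^(mn); the messages are the rows of X. *)
Definition msg_vec (F : fieldType) (m n : nat) (X : 'M[F]_(m, n)) : 'rV[F]_(m * n) :=
  mxvec X.

Definition side_info (F : fieldType) (m n : nat) (H : {set 'I_m}) (X : 'M[F]_(m, n))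
  : 'M[F]_(m, n) := \matrix_(j, k) (if j \in H then X j k else 0).

Definition is_vl_diff_ecic (F : fieldType) (m n c N : nat)
  (f : 'I_N -> 'I_m) (H : 'I_N -> {set 'I_m}) (delta : 'I_N -> nat)
  (L : 'M[F]_(m * n, c)) : Prop :=
  forall i : 'I_N, exists psi : 'rV[F]_c -> 'M[F]_(m, n) -> 'rV[F]_n,
    forall (X : 'M[F]_(m, n)) (eps : 'rV[F]_c),
      (hweight eps <= delta i)%N ->
      psi (msg_vec X *m L + eps) (side_info (H i) X) = row (f i) X.

Local Open Scope nat_scope.

Definition dsize (N : nat) (u : {ffun 'I_N -> nat}) : nat := \sum_j u j.
Definition dle (N : nat) (u v : {ffun 'I_N -> nat}) : bool := [forall j, u j <= v j].
Definition dlt (N : nat) (u v : {ffun 'I_N -> nat}) : bool := dle u v && (u != v).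
Definition djoin (N : nat) (u v : {ffun 'I_N -> nat}) : {ffun 'I_N -> nat} :=
  [ffun j => maxn (u j) (v j)].

(* D is a finite subset of Z_{>=0}^N, given as a list. *)
Definition is_discrete_polymatroid (N : nat) (D : seq {ffun 'I_N -> nat}) : Prop :=
  [/\ D != [::],
      (forall u v, u \in D -> dle v u -> v \in D) &
      (forall u v, u \in D -> v \in D -> dsize u < dsize v ->
         exists w, [/\ w \in D, dlt u w & dle w (djoin u v)])].

Definition dp_rank (N : nat) (D : seq {ffun 'I_N -> nat}) (A : {set 'I_N}) : nat :=
  \max_(u <- D) \sum_(j in A) u j.

(* rank function of the contraction D/T, evaluated on subsets A of E \ T *)
Definition dp_contract_rank (N : nat) (D : seq {ffun 'I_N -> nat}) (T A : {set 'I_N})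
  : nat := dp_rank D (A :|: T) - dp_rank D T.

Definition dp_representable (F : fieldType) (N : nat) (D : seq {ffun 'I_N -> nat}) : Prop :=
  exists (d : nat) (V : 'I_N -> 'M[F]_d),
    forall A : {set 'I_N}, \rank (\sum_(j in A) V j)%MS = dp_rank D A.

(* message j         |-> j
   coordinate j      |-> m + j
   coordinate j (S)  |-> m + c + j *)
Definition gmsg (m c : nat) (j : 'I_m) : 'I_(m + (c + c)) := lshift (c + c) j.
Definition gcode (m c : nat) (j : 'I_c) : 'I_(m + (c + c)) := rshift m (lshift c j).
Definition gS (m c : nat) (j : 'I_c) : 'I_(m + (c + c)) := rshift m (rshift c j).

Definition Msgs (m c : nat) : {set 'I_(m + (c + c))} := [set gmsg c j | j : 'I_m].
Definition Codes (m c : nat) : {set 'I_(m + (c + c))} := [set gcode m j | j : 'I_c].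
Definition Sset (m c : nat) : {set 'I_(m + (c + c))} := [set gS m j | j : 'I_c].

Definition Tset (m c : nat) (Hi : {set 'I_m}) (Fs : {set 'I_c}) : {set 'I_(m + (c + c))} :=
  (Msgs m c :|: Codes m c) :\: ([set gmsg c j | j in ~: Hi] :|: [set gcode m j | j in Fs]).

(* Main.v *)
Require Import Defs.
From HB Require Import structures.
From mathcomp Require Import all_boot all_order all_algebra all_fingroup all_field.
From mathcomp Require Import zify ring.
From Stdlib Require Import Lia.

Module TheoremHelpers.
Set Implicit Arguments. Unset Strict Implicit. Unset Printing Implicit Defensive.

Import GRing.Theory.
Local Open Scope ring_scope.

Local Open Scope nat_scope.
Definition usum N (u : {ffun 'I_N -> nat}) (A : {set 'I_N}) : nat := \sum_(j in A) u j.
Definition indep N (rho : {set 'I_N} -> nat) (u : {ffun 'I_N -> nat}) : bool :=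
  [forall A, usum u A <= rho A].
Definition incr N (u : {ffun 'I_N -> nat}) (j : 'I_N) : {ffun 'I_N -> nat} :=
  [ffun k => u k + (k == j)].

Lemma usum_incr N (u : {ffun 'I_N -> nat}) j A : usum (incr u j) A = usum u A + (j \in A).
Proof.
rewrite /usum (eq_bigr (fun k => u k + (k == j))) => [|k _]; last by rewrite ffunE.
rewrite big_split /=; congr (_ + _).
case: (boolP (j \in A)) => jA.
  rewrite (bigD1 j) //= eqxx big1 // => k /andP[_ /negbTE ->] //.
rewrite big1 // => k kA; apply/eqP; rewrite eqb0; apply: contraNneq jA => <-.
by [].
Qed.

Lemma usum_UI N (u : {ffun 'I_N -> nat}) A B :
  usum u (A :|: B) + usum u (A :&: B) = usum u A + usum u B.
Proof.
rewrite /usum (big_setID (A := A :|: B) B) (big_setID (A := A) B) /=.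
have -> : (A :|: B) :&: B = B by apply/setP=> x; rewrite !inE; case: (x \in A); case: (x \in B).
have -> : (A :|: B) :\: B = A :\: B by apply/setP=> x; rewrite !inE; case: (x \in A); case: (x \in B).
lia.
Qed.

Lemma tight_cover N (rho : {set 'I_N} -> nat) (h0 : rho set0 = 0)
  (hsub : forall A B, rho (A :|: B) + rho (A :&: B) <= rho A + rho B)
  u (P : {set 'I_N}) : indep rho u -> (forall j, j \in P -> ~~ indep rho (incr u j)) ->
  exists T : {set 'I_N}, P \subset T /\ usum u T = rho T.
Proof.
move=> iu hP.
pose A j := odflt set0 [pick B | rho B < usum (incr u j) B].
have hA j : j \in P -> j \in A j /\ usum u (A j) = rho (A j).
  move=> jP; have := hP j jP; rewrite /indep negb_forall => /existsP[B hB].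
  rewrite -ltnNge in hB.
  rewrite /A; case: pickP => [B' hB' | /(_ B)]; last by rewrite hB.
  rewrite /= usum_incr in hB'; have := forallP iu B'.
  by case: (j \in B') hB' => /= hB' hle; [split=>//; lia | lia].
exists (\bigcup_(j in P) A j); split.
  by apply/subsetP => j jP; apply/bigcupP; exists j => //; case: (hA j jP).
apply: (big_ind (fun B => usum u B = rho B)).
- by rewrite h0 /usum big_set0.
- move=> X Y hX hY; have := hsub X Y; have := usum_UI u X Y.
  have := forallP iu (X :|: Y); have := forallP iu (X :&: Y); lia.
- by move=> j jP; case: (hA j jP).
Qed.

Lemma usum_split N (u : {ffun 'I_N -> nat}) T : dsize u = usum u T + usum u (~: T).
Proof.
rewrite /dsize /usum (bigID (mem T)) /=; congr (_ + _).
by apply: eq_bigl => j; rewrite inE.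
Qed.

Lemma augment N (rho : {set 'I_N} -> nat) (h0 : rho set0 = 0)
  (hsub : forall A B, rho (A :|: B) + rho (A :&: B) <= rho A + rho B)
  u v : indep rho u -> indep rho v -> dsize u < dsize v ->
  exists j, u j < v j /\ indep rho (incr u j).
Proof.
move=> iu iv ltuv.
case: (pickP (fun j => (u j < v j) && indep rho (incr u j))) => [j /andP[h1 h2]|h].
  by exists j.
have hP : forall j, j \in [set j | u j < v j] -> ~~ indep rho (incr u j).
  by move=> j; rewrite inE => jP; move: (h j) => /=; rewrite jP /= => ->.
have [T [PT tT]] := tight_cover h0 hsub iu hP.
exfalso; move: ltuv; rewrite (usum_split u T) (usum_split v T).
have h1 : usum v T <= usum u T by rewrite tT; apply: (forallP iv).
have h2 : usum v (~: T) <= usum u (~: T).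
  apply: leq_sum => j; rewrite inE => jT; rewrite leqNgt; apply: contra jT => lt.
  by apply: (subsetP PT); rewrite inE.
lia.
Qed.

Lemma greedy N (rho : {set 'I_N} -> nat) (h0 : rho set0 = 0)
  (hmono : forall A B : {set 'I_N}, A \subset B -> rho A <= rho B)
  (hsub : forall A B, rho (A :|: B) + rho (A :&: B) <= rho A + rho B)
  A : exists u, indep rho u /\ usum u A = rho A.
Proof.
suff: forall k, exists u, [/\ indep rho u, (forall j, j \notin A -> u j = 0) &
    minn k (rho A) <= usum u A].
  move=> /(_ (rho A)) [u [iu _ hu]]; exists u; split => //.
  by apply/eqP; rewrite eqn_leq (forallP iu A) /=; rewrite minnn in hu.
elim=> [|k [u [iu su hu]]].
  exists [ffun=> 0]; split; last by rewrite min0n.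
    2: by move=> j _; rewrite ffunE.
  by apply/forallP => B; rewrite /usum big1 // => j _; rewrite ffunE.
case: (leqP (minn k.+1 (rho A)) (usum u A)) => hk; first by exists u.
have eqk : usum u A = k /\ k < rho A.
  move: hu hk; lia.
case: (pickP (fun j => (j \in A) && indep rho (incr u j))) => [j /andP[jA ij]|h].
  exists (incr u j); split => //.
    by move=> j' j'A; rewrite ffunE su //; case: eqP => // e; rewrite e jA in j'A.
  by rewrite usum_incr jA; case: eqk => -> _; rewrite addn1 geq_minl.
have hP : forall j, j \in A -> ~~ indep rho (incr u j).
  by move=> j jP; move: (h j) => /=; rewrite jP /= => ->.
have [T [AT tT]] := tight_cover h0 hsub iu hP.
exfalso; have := hmono _ _ AT; rewrite -tT.
have -> : usum u T = usum u A.
  rewrite /usum (big_setID (A := T) A) /=.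
  have -> : T :&: A = A by apply/setP=> x; rewrite inE andbC; case xA: (x \in A) => //=; exact: (subsetP AT).
  by rewrite [X in _ + X]big1 ?addn0 // => j; rewrite inE => /andP[jA _]; apply: su.
case: eqk; lia.
Qed.

Definition allv N B : seq {ffun 'I_N -> nat} :=
  map (fun g : {ffun 'I_N -> 'I_B.+1} => [ffun j => nat_of_ord (g j)])
    (enum {: {ffun 'I_N -> 'I_B.+1}}).
Definition Dof N (rho : {set 'I_N} -> nat) : seq {ffun 'I_N -> nat} :=
  [seq u <- allv N (rho setT) | indep rho u].

Lemma mem_Dof N (rho : {set 'I_N} -> nat)
  (hmono : forall A B : {set 'I_N}, A \subset B -> rho A <= rho B) u :
  (u \in Dof rho) = indep rho u.
Proof.
rewrite mem_filter; case iu: (indep rho u) => //=.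
apply/mapP; exists [ffun j => inord (u j) : 'I_(rho setT).+1]; first by rewrite mem_enum.
apply/ffunP => j; rewrite !ffunE inordK // ltnS.
apply: leq_trans (hmono _ _ (subsetT [set j])).
have := forallP iu [set j]; by rewrite /usum big_set1.
Qed.

Lemma poly_of_rho N (rho : {set 'I_N} -> nat) (h0 : rho set0 = 0)
  (hmono : forall A B : {set 'I_N}, A \subset B -> rho A <= rho B)
  (hsub : forall A B, rho (A :|: B) + rho (A :&: B) <= rho A + rho B) :
  is_discrete_polymatroid (Dof rho) /\ forall A, dp_rank (Dof rho) A = rho A.
Proof.
have mD := mem_Dof hmono.
split; first split.
- have : [ffun=> 0] \in Dof rho.
    by rewrite mD; apply/forallP => B; rewrite /usum big1 // => j _; rewrite ffunE.
  by apply: contraTneq => ->.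
- move=> u v; rewrite !mD => iu /forallP vu; apply/forallP => A.
  apply: leq_trans (forallP iu A); apply: leq_sum => j _; exact: vu.
- move=> u v; rewrite !mD => iu iv ltuv.
  have [j [ltj ij]] := augment h0 hsub iu iv ltuv.
  exists (incr u j); split; rewrite ?mD //.
    rewrite /dlt; apply/andP; split.
      by apply/forallP => k; rewrite ffunE leq_addr.
    apply/eqP => /ffunP /(_ j); rewrite ffunE eqxx addn1 => /eqP; by rewrite eqn_leq ltnn andbF.
  apply/forallP => k; rewrite !ffunE; case: eqP => [->|_]; first by rewrite addn1 leq_max ltj orbT.
  by rewrite addn0 leq_maxl.
- move=> A; apply/eqP; rewrite eqn_leq; apply/andP; split.
    rewrite /dp_rank big_seq; apply: (big_ind (fun x => x <= rho A)) => //.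
      by move=> x y hx hy; rewrite geq_max hx hy.
    by move=> u; rewrite mD => /forallP /(_ A).
  have [u [iu hu]] := greedy h0 hmono hsub A.
  rewrite -hu /dp_rank; apply: (@leq_bigmax_seq _ _ xpredT (fun u => usum u A)) => //.
  by rewrite mD.
Qed.

Local Open Scope ring_scope.

Definition Sig (F : fieldType) N d (V : 'I_N -> 'M[F]_d) (A : {set 'I_N}) : 'M[F]_d :=
  (\sum_(j in A) V j)%MS.

Lemma Sig_sub (F : fieldType) N d (V : 'I_N -> 'M[F]_d) (A : {set 'I_N}) k (W : 'M[F]_(k, d)) :
  (forall j, j \in A -> (V j <= W)%MS) -> (Sig V A <= W)%MS.
Proof. by move=> h; apply/sumsmx_subP. Qed.

Lemma V_Sig (F : fieldType) N d (V : 'I_N -> 'M[F]_d) (A : {set 'I_N}) j : j \in A -> (V j <= Sig V A)%MS.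
Proof. by move=> jA; apply: (sumsmx_sup j). Qed.

Lemma Sig_mono (F : fieldType) N d (V : 'I_N -> 'M[F]_d) (A B : {set 'I_N}) :
  A \subset B -> (Sig V A <= Sig V B)%MS.
Proof. by move=> AB; apply: Sig_sub => j jA; apply: V_Sig; apply: (subsetP AB). Qed.

Lemma rank_Sig_mono (F : fieldType) N d (V : 'I_N -> 'M[F]_d) (A B : {set 'I_N}) :
  A \subset B -> (\rank (Sig V A) <= \rank (Sig V B))%N.
Proof. by move=> AB; apply: mxrankS; apply: Sig_mono. Qed.

Lemma rank_Sig_sub (F : fieldType) N d (V : 'I_N -> 'M[F]_d) (A B : {set 'I_N}) :
  (\rank (Sig V (A :|: B)) + \rank (Sig V (A :&: B)) <= \rank (Sig V A) + \rank (Sig V B))%N.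
Proof.
rewrite -(mxrank_sum_cap (Sig V A) (Sig V B)) leq_add //.
  apply: mxrankS; apply: Sig_sub => j; rewrite inE => /orP[jA|jB].
    by apply: submx_trans (addsmxSl _ _); apply: V_Sig.
  by apply: submx_trans (addsmxSr _ _); apply: V_Sig.
apply: mxrankS; apply: Sig_sub => j; rewrite inE => /andP[jA jB].
by rewrite sub_capmx !V_Sig.
Qed.

Lemma rank_Sig0 (F : fieldType) N d (V : 'I_N -> 'M[F]_d) : \rank (Sig V set0) = 0%N.
Proof. by rewrite /Sig big_set0 mxrank0. Qed.

Lemma repr_poly (F : fieldType) N d (V : 'I_N -> 'M[F]_d) :
  exists D, [/\ is_discrete_polymatroid D, dp_representable F D &
     forall A, dp_rank D A = \rank (Sig V A)].
Proof.
have [h1 h2] := poly_of_rho (rank_Sig0 V) (@rank_Sig_mono _ _ _ V) (@rank_Sig_sub _ _ _ V).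
exists (Dof (fun A => \rank (Sig V A))); split => //.
by exists d, V => A; rewrite h2.
Qed.

Import GRing.Theory.
Local Open Scope ring_scope.

Lemma extend_set c (S : {set 'I_c}) k : (#|S| <= k)%N -> (k <= c)%N ->
  exists Fs : {set 'I_c}, S \subset Fs /\ #|Fs| = k.
Proof.
elim: k => [|k IH] hS hk.
  by exists set0; move: hS; rewrite leqn0 => /eqP/cards0_eq ->; rewrite cards0.
case: (ltnP #|S| k.+1) => h; last first.
  by exists S; split => //; apply/eqP; rewrite eqn_leq hS h.
have [Fs [SF cF]] := IH h (ltnW hk).
have : (0 < #|~: Fs|)%N by rewrite cardsCs setCK card_ord cF; lia.
move=> /card_gt0P [x]; rewrite inE => xF.
exists (x |: Fs); split; first by apply: subset_trans SF (subsetUr _ _).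
by rewrite cardsU1 xF cF.
Qed.

Lemma side_info0 (F : fieldType) m n (H : {set 'I_m}) : side_info H (0 : 'M[F]_(m, n)) = 0.
Proof. by apply/matrixP => j k; rewrite !mxE; case: ifP. Qed.

Lemma msg_vec0 (F : fieldType) m n : msg_vec (0 : 'M[F]_(m, n)) = 0.
Proof. by apply/rowP => p; case/mxvec_indexP: p => j k; rewrite /msg_vec mxvecE !mxE. Qed.

Lemma msg_vecB (F : fieldType) m n (X Y : 'M[F]_(m, n)) : msg_vec (X - Y) = msg_vec X - msg_vec Y.
Proof. by apply/rowP => p; case/mxvec_indexP: p => j k; rewrite /msg_vec !mxE !mxvecE !mxE. Qed.

Lemma decode_zero (F : finFieldType) m n c N (f : 'I_N -> 'I_m) H delta
  (L : 'M[F]_(m * n, c)) : is_vl_diff_ecic f H delta L ->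
  forall i (Fs : {set 'I_c}) (Z : 'M[F]_(m, n)), #|Fs| = (2 * delta i)%N ->
  side_info (H i) Z = 0 -> (forall l, l \notin Fs -> (msg_vec Z *m L) 0 l = 0) ->
  row (f i) Z = 0.
Proof.
move=> hL i Fs Z cF hZ hsupp.
have [psi hpsi] := hL i.
set y := msg_vec Z *m L.
pose A := [set x in take (delta i) (enum Fs)].
pose e1 : 'rV[F]_c := \row_l (if l \in A then y 0 l else 0).
have w1 : (hweight (- e1) <= delta i)%N.
  apply: (@leq_trans #|A|).
    apply: subset_leq_card; apply/subsetP => j; rewrite !inE !mxE /A !inE.
    by case: (j \in take _ _) => //=; rewrite oppr0 eqxx.
  rewrite cardsE; apply: leq_trans (card_size _) _; rewrite size_take; case: ifP => //.
  by move=> /negbT; rewrite -leqNgt.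
have w2 : (hweight (y - e1) <= delta i)%N.
  apply: (@leq_trans #|[set x in drop (delta i) (enum Fs)]|).
    apply: subset_leq_card; apply/subsetP => j; rewrite !inE !mxE /A !inE.
    case jt: (j \in take _ _); first by rewrite subrr eqxx.
    rewrite subr0 => yj.
    have {}yj : y 0 j != 0 by rewrite /y mxE.
    have jF : j \in Fs by apply: contraR yj => /hsupp ->; rewrite eqxx.
    by move: jF; rewrite -mem_enum -{1}(cat_take_drop (delta i) (enum Fs)) mem_cat jt.
  rewrite cardsE; apply: leq_trans (card_size _) _; rewrite size_drop -cardE cF; lia.
have h1 := hpsi Z (- e1) w1.
have h2 := hpsi 0 (y - e1) w2.
rewrite msg_vec0 mul0mx add0r side_info0 row0 in h2.
by rewrite -h1 hZ.
Qed.

Lemma decodable_of (F : finFieldType) m n c N (f : 'I_N -> 'I_m) H delta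
  (L : 'M[F]_(m * n, c)) (hd : forall i, (2 * delta i <= c)%N) :
  (forall i (Fs : {set 'I_c}) (Z : 'M[F]_(m, n)), #|Fs| = (2 * delta i)%N ->
  side_info (H i) Z = 0 -> (forall l, l \notin Fs -> (msg_vec Z *m L) 0 l = 0) ->
  row (f i) Z = 0) -> is_vl_diff_ecic f H delta L.
Proof.
move=> hP i.
exists (fun y s => row (f i) (odflt 0 [pick X' : 'M[F]_(m, n) | (side_info (H i) X' == s) &&
   [exists e : 'rV[F]_c, (hweight e <= delta i)%N && (msg_vec X' *m L + e == y)]])).
move=> X eps we.
case: pickP => [X' /andP[/eqP hs /existsP[e /andP[we' /eqP he]]] /= | /(_ X)]; last first.
  rewrite eqxx /= => /existsP; case; exists eps; by rewrite we eqxx.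
pose S := [set l | eps 0 l != 0] :|: [set l | e 0 l != 0].
have cS : (#|S| <= 2 * delta i)%N.
  apply: leq_trans (leq_card_setU _ _) _; rewrite mul2n -addnn leq_add //.
have [Fs [SF cF]] := extend_set cS (hd i).
have hside : side_info (H i) (X' - X) = 0.
  apply/matrixP => j k; move/matrixP: hs => /(_ j k); rewrite !mxE.
  by case: ifP => // _ ->; rewrite subrr.
have hZ0 : forall l, l \notin Fs -> (msg_vec (X' - X) *m L) 0 l = 0.
  move=> l lF; rewrite msg_vecB mulmxBl.
  have -> : msg_vec X' *m L = msg_vec X *m L + eps - e by rewrite -he addrK.
  rewrite !mxE.
  have : l \notin S by apply: contra lF; apply: (subsetP SF).
  rewrite !inE negb_or !negbK => /andP[/eqP -> /eqP ->]; rewrite !addr0 subr0 subrr //.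
have := hP i Fs (X' - X) cF hside hZ0.
move=> h; apply/rowP => k; move/rowP: h => /(_ k); rewrite !mxE => /eqP.
by rewrite subr_eq0 => /eqP.
Qed.

Import GRing.Theory.
Local Open Scope ring_scope.

Lemma split_l m n (j : 'I_m) : @split m n (lshift n j) = inl j.
Proof. exact: (unsplitK (inl j)). Qed.
Lemma split_r m n (j : 'I_n) : @split m n (rshift m j) = inr j.
Proof. exact: (unsplitK (inr j)). Qed.

Lemma mxvec_index_inj m n (j j' : 'I_m) (k k' : 'I_n) :
  mxvec_index j k = mxvec_index j' k' -> j = j' /\ k = k'.
Proof. by move=> /cast_ord_inj /enum_rank_inj [-> ->]. Qed.

Lemma delta_lshift (F : fieldType) a b (q : 'I_a) :
  row_mx (delta_mx 0 q) (0 : 'rV[F]_b) = delta_mx 0 (lshift b q).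
Proof.
apply/rowP => p; rewrite -(splitK p); case: (split p) => {}p /=; rewrite ?row_mxEl ?row_mxEr !mxE //.
by have -> : (rshift a p == lshift b q) = false by apply/eqP => /(congr1 val) /=; case: q; case: p => /=; lia.
Qed.

Lemma delta_rshift (F : fieldType) a b (l : 'I_b) :
  row_mx (0 : 'rV[F]_a) (delta_mx 0 l) = delta_mx 0 (rshift a l).
Proof.
apply/rowP => p; rewrite -(splitK p); case: (split p) => {}p /=; rewrite ?row_mxEl ?row_mxEr !mxE //.
  by have -> : (lshift b p == rshift a l) = false by apply/eqP => /(congr1 val) /=; case: l; case: p => /=; lia.
have -> : (rshift a p == rshift a l) = (p == l) by apply/eqP/eqP => [/rshift_inj|->].
by [].
Qed.

Definition Emsg (F : fieldType) m n c (j : 'I_m) : 'M[F]_(n, m * n + c) :=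
  \matrix_(k < n) delta_mx 0 (lshift c (mxvec_index j k)).
Definition ucode (F : fieldType) m n c (L : 'M[F]_(m * n, c)) (l : 'I_c) : 'rV[F]_(m * n + c) :=
  row_mx (col l L)^T (delta_mx 0 l).
Definition sS (F : fieldType) m n c (l : 'I_c) : 'rV[F]_(m * n + c) :=
  row_mx 0 (delta_mx 0 l).
Definition Vfw (F : fieldType) m n c (L : 'M[F]_(m * n, c)) (k : 'I_(m + (c + c))) :
  'M[F]_(m * n + c) :=
  match split k with
  | inl j => <<@Emsg F m n c j>>%MS
  | inr k' => match split k' with inl l => <<@ucode F m n c L l>>%MS | inr l => <<@sS F m n c l>>%MS end
  end.

Arguments Vfw {F} m n {c} L k.
Arguments ucode {F} m n {c} L l.

Lemma Vfw_msg (F : fieldType) m n c (L : 'M[F]_(m * n, c)) j : Vfw m n L (gmsg c j) = <<@Emsg F m n c j>>%MS.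
Proof. by rewrite /Vfw /gmsg split_l. Qed.
Lemma Vfw_code (F : fieldType) m n c (L : 'M[F]_(m * n, c)) l : Vfw m n L (gcode m l) = <<ucode m n L l>>%MS.
Proof. by rewrite /Vfw /gcode split_r split_l. Qed.
Lemma Vfw_S (F : fieldType) m n c (L : 'M[F]_(m * n, c)) l : Vfw m n L (gS m l) = <<@sS F m n c l>>%MS.
Proof. by rewrite /Vfw /gS split_r split_r. Qed.

Lemma mem_msgs m c j : gmsg c j \in Msgs m c.
Proof. exact: imset_f. Qed.
Lemma mem_codes m c l : gcode m l \in Codes m c.
Proof. exact: imset_f. Qed.
Lemma mem_S m c l : gS m l \in Sset m c.
Proof. exact: imset_f. Qed.

Arguments mem_msgs : clear implicits.
Arguments mem_codes : clear implicits.
Arguments mem_S : clear implicits.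

Lemma eL (F : fieldType) m n c (L : 'M[F]_(m * n, c)) (q : 'I_(m * n)) :
  ((delta_mx 0 (lshift c q) : 'rV[F]_(m * n + c)) <= Sig (Vfw m n L) (Msgs m c))%MS.
Proof.
case/mxvec_indexP: q => j k.
apply: (submx_trans _ (V_Sig _ (mem_msgs m c j))); rewrite Vfw_msg genmxE.
by rewrite -[X in (X <= _)%MS](rowK (fun k => delta_mx 0 (lshift c (mxvec_index j k)) : 'rV[F]_(m * n + c))) row_sub.
Qed.

Lemma rowL (F : fieldType) m n c (L : 'M[F]_(m * n, c)) (a : 'rV[F]_(m * n)) :
  (row_mx a 0 <= Sig (Vfw m n L) (Msgs m c))%MS.
Proof.
have -> : row_mx a (0 : 'rV_c) = a *m row_mx 1%:M 0 by rewrite mul_mx_row mulmx1 mulmx0.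
apply: submx_trans (submxMl _ _) _; apply/row_subP => q.
by rewrite row_row_mx row1 row0 delta_lshift eL.
Qed.

Lemma sS_sub (F : fieldType) m n c (L : 'M[F]_(m * n, c)) l :
  (@sS F m n c l <= Sig (Vfw m n L) (Msgs m c) + Vfw m n L (gcode m l))%MS.
Proof.
have -> : @sS F m n c l = row_mx (- (col l L)^T) 0 + ucode m n L l.
  by rewrite /sS /ucode add_row_mx addNr add0r.
by apply: addmx_sub_adds; [exact: rowL | rewrite Vfw_code genmxE].
Qed.

Lemma u_sub (F : fieldType) m n c (L : 'M[F]_(m * n, c)) l :
  (ucode m n L l <= Sig (Vfw m n L) (Msgs m c) + Vfw m n L (gS m l))%MS.
Proof.
have -> : ucode m n L l = row_mx (col l L)^T 0 + @sS F m n c l.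
  by rewrite /sS /ucode add_row_mx addr0 add0r.
by apply: addmx_sub_adds; [exact: rowL | rewrite Vfw_S genmxE].
Qed.

Lemma full_MC (F : fieldType) m n c (L : 'M[F]_(m * n, c)) :
  (1%:M <= Sig (Vfw m n L) (Msgs m c :|: Codes m c))%MS.
Proof.
apply/row_subP => p; rewrite row1 -(splitK p); case: (split p) => q /=.
  by apply: submx_trans (eL L q) _; apply: Sig_mono; apply: subsetUl.
rewrite -delta_rshift; apply: submx_trans (sS_sub L q) _; rewrite addsmx_sub; apply/andP; split.
  by apply: Sig_mono; apply: subsetUl.
by apply: V_Sig; rewrite inE mem_codes orbT.
Qed.

Lemma rank_full (F : fieldType) m n c (L : 'M[F]_(m * n, c)) (A : {set 'I_(m + (c + c))}) :
  Msgs m c :|: Codes m c \subset A -> \rank (Sig (Vfw m n L) A) = (m * n + c)%N.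
Proof.
move=> hA; apply/eqP; rewrite eqn_leq rank_leq_col /=.
rewrite -{1}(mxrank1 F (m * n + c)); apply: mxrankS.
by apply: submx_trans (full_MC L) _; apply: Sig_mono.
Qed.

Lemma rank_msg (F : fieldType) m n c (L : 'M[F]_(m * n, c)) j :
  \rank (Sig (Vfw m n L) [set gmsg c j]) = n.
Proof.
rewrite /Sig big_set1 Vfw_msg genmxE; apply/eqP; rewrite -/(row_free _).
apply: inj_row_free => v /rowP hv; apply/rowP => k.
move: (hv (lshift c (mxvec_index j k))); rewrite !mxE (bigD1 k) //= [X in _ + X]big1 ?addr0.
  by rewrite /Emsg !mxE !eqxx mulr1.
move=> k' hk'; rewrite /Emsg !mxE eq_lshift /=.
case: eqP => [/mxvec_index_inj [_ e]|]; last by rewrite mulr0.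
by rewrite e eqxx in hk'.
Qed.


Lemma rank_eq_of (F : fieldType) a b d (A : 'M[F]_(a, d)) (B : 'M[F]_(b, d)) :
  (A <= B)%MS -> (B <= A)%MS -> \rank A = \rank B.
Proof. by move=> h1 h2; apply/eqP; rewrite eqn_leq !mxrankS. Qed.

Lemma rank_one (F : fieldType) m n c (L : 'M[F]_(m * n, c)) (k : 'I_(m + (c + c))) :
  (m <= k)%N -> \rank (Sig (Vfw m n L) [set k]) = 1%N.
Proof.
rewrite /Sig big_set1 -(splitK k); case: (split k) => [j|k'] /=.
  by move=> h; have := ltn_ord j; rewrite ltnNge h.
move=> _; rewrite -(splitK k'); case: (split k') => l /=.
  have -> : rshift m (lshift c l) = gcode m l by [].
  rewrite Vfw_code genmxE rank_rV; apply/eqP; rewrite eqb1.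
  apply/eqP => /rowP /(_ (rshift _ l)); rewrite /ucode row_mxEr !mxE !eqxx => /eqP.
  by rewrite oner_eq0.
have -> : rshift m (rshift c l) = gS m l by [].
rewrite Vfw_S genmxE rank_rV; apply/eqP; rewrite eqb1.
apply/eqP => /rowP /(_ (rshift _ l)); rewrite /sS row_mxEr !mxE !eqxx => /eqP.
by rewrite oner_eq0.
Qed.

Lemma fw_B (F : fieldType) m n c (L : 'M[F]_(m * n, c)) (j : 'I_c) :
  \rank (Sig (Vfw m n L) (Msgs m c :|: [set gcode m j; gS m j]))
    = \rank (Sig (Vfw m n L) (Msgs m c :|: [set gcode m j]))
  /\ \rank (Sig (Vfw m n L) (Msgs m c :|: [set gcode m j]))
    = \rank (Sig (Vfw m n L) (Msgs m c :|: [set gS m j])).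
Proof.
have hM (A : {set 'I_(m + (c + c))}) : (Sig (Vfw m n L) (Msgs m c) <= Sig (Vfw m n L) (Msgs m c :|: A))%MS.
  by apply: Sig_mono; apply: subsetUl.
have h2 : (Sig (Vfw m n L) (Msgs m c :|: [set gcode m j; gS m j])
   <= Sig (Vfw m n L) (Msgs m c :|: [set gcode m j]))%MS.
  apply: Sig_sub => k; rewrite !inE => /orP[kM|/orP[/eqP->|/eqP->]].
  - by apply: V_Sig; rewrite inE kM.
  - by apply: V_Sig; rewrite !inE eqxx orbT.
  rewrite Vfw_S genmxE; apply: submx_trans (sS_sub L j) _.
  rewrite addsmx_sub hM /=; by apply: V_Sig; rewrite !inE eqxx orbT.
have h3 : (Sig (Vfw m n L) (Msgs m c :|: [set gcode m j; gS m j])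
   <= Sig (Vfw m n L) (Msgs m c :|: [set gS m j]))%MS.
  apply: Sig_sub => k; rewrite !inE => /orP[kM|/orP[/eqP->|/eqP->]].
  - by apply: V_Sig; rewrite inE kM.
  - rewrite Vfw_code genmxE; apply: submx_trans (u_sub L j) _.
    rewrite addsmx_sub hM /=; by apply: V_Sig; rewrite !inE eqxx orbT.
  by apply: V_Sig; rewrite !inE eqxx orbT.
have s2 : Msgs m c :|: [set gcode m j] \subset Msgs m c :|: [set gcode m j; gS m j].
  by apply/subsetP => k; rewrite !inE => /orP[->|->]; rewrite ?orbT.
have s3 : Msgs m c :|: [set gS m j] \subset Msgs m c :|: [set gcode m j; gS m j].
  by apply/subsetP => k; rewrite !inE => /orP[->|->]; rewrite ?orbT.
split; first exact: rank_eq_of h2 (Sig_mono _ s2).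
by rewrite -(rank_eq_of h2 (Sig_mono _ s2)); apply: rank_eq_of h3 (Sig_mono _ s3).
Qed.

Lemma memT_code m c (Hi : {set 'I_m}) (Fs : {set 'I_c}) l :
  l \notin Fs -> gcode m l \in Tset Hi Fs.
Proof.
move=> lF; rewrite /Tset inE !in_setU mem_codes orbT andbT negb_or; apply/andP; split.
  by apply/imsetP => -[j _ /(congr1 val) /=]; have := ltn_ord j; lia.
apply/imsetP => -[l' l'F /(congr1 val) /= e].
have e' : l = l' by apply: val_inj => /=; lia.
by rewrite e' l'F in lF.
Qed.

Lemma memT_msg m c (Hi : {set 'I_m}) (Fs : {set 'I_c}) j :
  j \in Hi -> gmsg c j \in Tset Hi Fs.
Proof.
move=> jH; rewrite /Tset inE !in_setU mem_msgs andbT negb_or; apply/andP; split.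
  apply/imsetP => -[j' j'H /(congr1 val) /= e].
  have e' : j = j' by apply: val_inj.
  by move: j'H; rewrite inE -e' jH.
by apply/imsetP => -[l _ /(congr1 val) /=]; have := ltn_ord j; lia.
Qed.

Lemma fw_C (F : finFieldType) m n c N (f : 'I_N -> 'I_m) H delta (L : 'M[F]_(m * n, c))
  (hL : is_vl_diff_ecic f H delta L) i (Fs : {set 'I_c}) (cF : #|Fs| = (2 * delta i)%N) :
  \rank (Sig (Vfw m n L) ((gmsg c (f i) |: Sset m c) :|: Tset (H i) Fs))
  = \rank (Sig (Vfw m n L) (Sset m c :|: Tset (H i) Fs)).
Proof.
set W := Sig (Vfw m n L) (Sset m c :|: Tset (H i) Fs).
suff hf : (Vfw m n L (gmsg c (f i)) <= W)%MS.
  apply: rank_eq_of; last first.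
    by apply: Sig_mono; apply/subsetP => k; rewrite !in_setU ?in_set1 => /orP[->|->]; rewrite ?orbT.
  apply: Sig_sub => k; rewrite !in_setU ?in_set1 -orbA => /orP[/eqP->//|kST].
  by apply: V_Sig; rewrite in_setU.
rewrite Vfw_msg genmxE; apply/row_subP => k; rewrite rowK submxE.
have hK (g : 'rV[F]_(m * n + c)) : (g <= W)%MS -> g *m cokermx W = 0 by rewrite submxE => /eqP.
move: (cokermx W) hK => K hK.
have h1 l : @sS F m n c l *m K = 0.
  apply: hK; apply: submx_trans (V_Sig _ (_ : gS m l \in Sset m c :|: Tset (H i) Fs)).
    by rewrite Vfw_S genmxE.
  by rewrite inE mem_S.
have h2 l : l \notin Fs -> ucode m n L l *m K = 0.
  move=> lF; apply: hK; apply: submx_trans (V_Sig _ (_ : gcode m l \in Sset m c :|: Tset (H i) Fs)).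
    by rewrite Vfw_code genmxE.
  by rewrite inE memT_code ?orbT.
apply/eqP; apply/rowP => q.
rewrite -rowE !mxE.
have h3 j k' : j \in H i -> K (lshift c (mxvec_index j k')) q = 0.
  move=> jH.
  have : (delta_mx 0 (lshift c (mxvec_index j k')) : 'rV[F]_(m * n + c)) *m K = 0.
    apply: hK; apply: submx_trans (V_Sig _ (_ : gmsg c j \in Sset m c :|: Tset (H i) Fs)).
      rewrite Vfw_msg genmxE.
      by rewrite -[X in (X <= _)%MS](rowK (fun k => delta_mx 0 (lshift c (mxvec_index j k)) : 'rV[F]_(m * n + c))) row_sub.
    by rewrite inE memT_msg ?orbT.
  by rewrite -rowE => /rowP /(_ q); rewrite !mxE.
pose Z : 'M[F]_(m, n) := \matrix_(j, k') K (lshift c (mxvec_index j k')) q.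
have hZv : msg_vec Z = \row_p K (lshift c p) q.
  by apply/rowP => p; case/mxvec_indexP: p => j k'; rewrite /msg_vec mxvecE !mxE.
have hside : side_info (H i) Z = 0.
  by apply/matrixP => j k'; rewrite !mxE; case: ifP => // jH; rewrite h3.
have hsupp : forall l, l \notin Fs -> (msg_vec Z *m L) 0 l = 0.
  move=> l lF.
  have : row_mx (col l L)^T 0 *m K = 0.
    have := h2 l lF; rewrite (_ : ucode m n L l = row_mx (col l L)^T 0 + @sS F m n c l).
      by rewrite mulmxDl h1 addr0.
    by rewrite /sS /ucode add_row_mx addr0 add0r.
  rewrite -[K]vsubmxK mul_row_col mul0mx addr0 => /rowP /(_ q); rewrite !mxE => h.
  by apply: etrans h; apply: eq_bigr => p _; rewrite hZv !mxE mulrC.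
have := decode_zero hL cF hside hsupp => /rowP /(_ k); rewrite !mxE.
by [].
Qed.

Import GRing.Theory.
Local Open Scope ring_scope.

Definition pickB (F : finFieldType) d k (A : 'M[F]_d) : 'M[F]_(k, d) :=
  odflt 0 [pick B : 'M[F]_(k, d) | row_free B && (B == A)%MS].

Lemma pickBP (F : finFieldType) d k (A : 'M[F]_d) : \rank A = k ->
  row_free (pickB k A) /\ (pickB k A == A)%MS.
Proof.
move=> hk; rewrite /pickB; case: pickP => [B /andP[h1 h2] | h] /=; first by [].
exfalso.
suff: forall k' (B : 'M[F]_(k', d)), k' = k -> row_free B -> (B == A)%MS -> False.
  move=> H0; apply: (H0 _ (row_base A) hk (row_base_free A)); apply/eqmxP; exact: eq_row_base.
move=> k' B e; subst k' => h1 h2; by move: (h B); rewrite h1 h2.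
Qed.

Lemma sub_mul0 (F : fieldType) a b d p (A : 'M[F]_(a, d)) (G : 'M[F]_(b, d)) (phi : 'M[F]_(d, p)) :
  (A <= G)%MS -> G *m phi = 0 -> A *m phi = 0.
Proof. by move=> /submxP [D ->] h; rewrite -mulmxA h mulmx0. Qed.

Lemma rank_ge_sub (F : fieldType) a b d (A : 'M[F]_(a, d)) (B : 'M[F]_(b, d)) :
  (A <= B)%MS -> \rank A = \rank B -> (B <= A)%MS.
Proof. by move=> sAB e; case: (mxrank_leqif_sup sAB) => _; rewrite e eqxx. Qed.

Lemma bw (F : finFieldType) m n c N (f : 'I_N -> 'I_m) (H : 'I_N -> {set 'I_m})
  (delta : 'I_N -> nat) (hd : forall i, (2 * delta i <= c)%N) d
  (V : 'I_(m + (c + c)) -> 'M[F]_d)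
  (ha : forall j, \rank (V (gmsg c j)) = n)
  (hb : \rank (Sig V (Msgs m c :|: Codes m c)) = (m * n + c)%N)
  (hcc : forall l, \rank (V (gcode m l)) = 1%N) (hcs : forall l, \rank (V (gS m l)) = 1%N)
  (hB1 : forall l, (Sig V (Msgs m c :|: [set gcode m l; gS m l])
                    <= Sig V (Msgs m c :|: [set gcode m l]))%MS)
  (hB2 : forall l, (Sig V (Msgs m c :|: [set gcode m l; gS m l])
                    <= Sig V (Msgs m c :|: [set gS m l]))%MS)
  (hC : forall i (Fs : {set 'I_c}), #|Fs| = (2 * delta i)%N ->
     (V (gmsg c (f i)) <= Sig V (Sset m c :|: Tset (H i) Fs))%MS) :
  exists L : 'M[F]_(m * n, c), is_vl_diff_ecic f H delta L.
Proof.
pose Bm j : 'M[F]_(n, d) := pickB n (V (gmsg c j)).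
pose u l : 'rV[F]_d := pickB 1 (V (gcode m l)).
pose s l : 'rV[F]_d := pickB 1 (V (gS m l)).
have hBm j : (Bm j == V (gmsg c j))%MS by case: (pickBP (ha j)).
have hu l : row_free (u l) /\ (u l == V (gcode m l))%MS by apply: pickBP.
have hs l : row_free (s l) /\ (s l == V (gS m l))%MS by apply: pickBP.
pose dec (p : 'I_(m * n)) := enum_val (cast_ord (esym (mxvec_cast m n)) p).
pose Bmsg : 'M[F]_(m * n, d) := \matrix_p row (dec p).2 (Bm (dec p).1).
have rowBmsg j k : row (mxvec_index j k) Bmsg = row k (Bm j).
  by rewrite rowK /dec /mxvec_index cast_ordK enum_rankK.
pose U : 'M[F]_(c, d) := \matrix_l u l.
pose Ball : 'M[F]_(m * n + c, d) := col_mx Bmsg U.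
have BmBall j : (Bm j <= Ball)%MS.
  apply/row_subP => k; rewrite -rowBmsg /Ball -addsmxE.
  by apply: submx_trans (row_sub _ _) (addsmxSl _ _).
have uBall l : (u l <= Ball)%MS.
  by rewrite /Ball -addsmxE -(rowK u l); apply: submx_trans (row_sub _ _) (addsmxSr _ _).
have F1 : (Ball <= Sig V (Msgs m c :|: Codes m c))%MS.
  apply/row_subP => p; rewrite -(splitK p); case: (split p) => [q|l] /=.
    rewrite rowKu; case/mxvec_indexP: q => j k; rewrite rowBmsg.
    apply: submx_trans (row_sub _ _) _; apply: submx_trans (_ : (Bm j <= V (gmsg c j))%MS) _.
      by move/andP: (hBm j) => [].
    by apply: V_Sig; rewrite inE mem_msgs.
  rewrite rowKd rowK; apply: submx_trans (_ : (u l <= V (gcode m l))%MS) _.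
    by case: (hu l) => _ /andP[].
  by apply: V_Sig; rewrite inE mem_codes orbT.
have F2 : (Sig V (Msgs m c :|: Codes m c) <= Ball)%MS.
  apply: Sig_sub => k; rewrite inE => /orP[/imsetP[j _ ->]|/imsetP[l _ ->]].
    by apply: submx_trans (BmBall j); move/andP: (hBm j) => [].
  by apply: submx_trans (uBall l); case: (hu l) => _ /andP[].
have freeBall : row_free Ball by apply/eqP; rewrite (rank_eq_of F1 F2) hb.
have [R hR] := row_freeP freeBall.
have F5 (g : 'rV[F]_(m * n + c)) : g *m Ball *m R = g by rewrite -mulmxA hR mulmx1.
have BmsgBall : (Bmsg <= Ball)%MS by rewrite /Ball -addsmxE addsmxSl.
have VBm j : (V (gmsg c j) <= Bmsg)%MS.
  apply: submx_trans (_ : (Bm j <= Bmsg)%MS); first by move/andP: (hBm j) => [].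
  by apply/row_subP => k; rewrite -rowBmsg row_sub.
have SMs : (Sig V (Msgs m c) <= Bmsg)%MS.
  by apply: Sig_sub => k /imsetP[j _ ->]; apply: VBm.
have F6 l : (s l <= Bmsg + u l)%MS.
  apply: submx_trans (_ : (s l <= V (gS m l))%MS) _; first by case: (hs l) => _ /andP[].
  apply: submx_trans (V_Sig _ (_ : gS m l \in Msgs m c :|: [set gcode m l; gS m l])) _.
    by rewrite !inE eqxx !orbT.
  apply: submx_trans (hB1 l) _; apply: Sig_sub => k; rewrite in_setU in_set1 => /orP[kM|/eqP->].
    by apply: submx_trans (addsmxSl _ _); apply: submx_trans SMs; apply: V_Sig.
  by apply: submx_trans (addsmxSr _ _); case: (hu l) => _ /andP[].
have F7 l : (u l <= Bmsg + s l)%MS.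
  apply: submx_trans (_ : (u l <= V (gcode m l))%MS) _; first by case: (hu l) => _ /andP[].
  apply: submx_trans (V_Sig _ (_ : gcode m l \in Msgs m c :|: [set gcode m l; gS m l])) _.
    by rewrite !inE eqxx !orbT.
  apply: submx_trans (hB2 l) _; apply: Sig_sub => k; rewrite in_setU in_set1 => /orP[kM|/eqP->].
    by apply: submx_trans (addsmxSl _ _); apply: submx_trans SMs; apply: V_Sig.
  by apply: submx_trans (addsmxSr _ _); case: (hs l) => _ /andP[].
have urow l : (delta_mx 0 (rshift (m * n) l) : 'rV[F]_(m * n + c)) *m Ball = u l.
  by rewrite -rowE rowKd rowK.
have coord l : exists g : 'rV[F]_(m * n), exists a : F,
    a != 0 /\ s l = row_mx g (a *: delta_mx 0 l) *m Ball.
  have /sub_addsmxP [[w1 w2] /= e] := F6 l.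
  exists w1, (w2 0 0).
  have e2 : s l = row_mx w1 (w2 0 0 *: delta_mx 0 l) *m Ball.
    rewrite /Ball mul_row_col -scalemxAl -rowE rowK e; congr (_ + _).
    by rewrite {1}(mx11_scalar w2) mul_scalar_mx.
  split => //; apply/eqP => a0.
  have sB : (s l <= Bmsg)%MS by rewrite e2 a0 scale0r /Ball mul_row_col mul0mx addr0 submxMl.
  have /submxP [v ev] : (u l <= Bmsg)%MS.
    by apply: submx_trans (F7 l) _; rewrite addsmx_sub submx_refl sB.
  have : (delta_mx 0 (rshift (m * n) l) : 'rV[F]_(m * n + c)) *m Ball = row_mx v 0 *m Ball.
    by rewrite urow ev /Ball mul_row_col mul0mx addr0.
  move/(row_free_inj freeBall) => /rowP /(_ (rshift _ l)); rewrite row_mxEr !mxE !eqxx /=.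
  by move/eqP; rewrite oner_eq0.
pose g l : 'rV[F]_(m * n + c) := s l *m R.
have hg1 l : s l = g l *m Ball.
  have [g0 [a [_ e]]] := coord l; by rewrite /g {2}e F5.
have hg2 l l' : l' != l -> g l 0 (rshift (m * n) l') = 0.
  have [g0 [a [_ e]]] := coord l; rewrite /g e F5 row_mxEr !mxE => /negbTE ->.
  by rewrite andbF mulr0.
have hg3 l : g l 0 (rshift (m * n) l) != 0.
  have [g0 [a [a0 e]]] := coord l; by rewrite /g e F5 row_mxEr !mxE !eqxx mulr1.
pose L : 'M[F]_(m * n, c) :=
  \matrix_(p, l) (- g l 0 (lshift c p) / g l 0 (rshift (m * n) l)).
exists L; apply: decodable_of hd _ => i Fs Z cF hside hsupp.
pose w : 'rV[F]_(m * n + c) := row_mx (msg_vec Z) (msg_vec Z *m L).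
pose phi := R *m w^T.
have hphi (ga : 'rV[F]_(m * n + c)) : ga *m Ball *m phi = ga *m w^T by rewrite mulmxA F5.
have dot (ga : 'rV[F]_(m * n + c)) : (ga *m w^T) 0 0 = \sum_p ga 0 p * w 0 p.
  by rewrite !mxE; apply: eq_bigr => p _; rewrite mxE.
have zero11 (A : 'M[F]_1) : A 0 0 = 0 -> A = 0.
  by move=> h; apply/matrixP => a b; rewrite !ord1 h mxE.
have hS l : s l *m phi = 0.
  apply: zero11; rewrite hg1 hphi dot big_split_ord /=.
  rewrite (bigD1 l) //= [X in _ + (_ + X)]big1 ?addr0 => [|l' hl']; last first.
    by rewrite hg2 // mul0r.
  rewrite row_mxEr.
  have -> : (msg_vec Z *m L) 0 l
      = - (\sum_p g l 0 (lshift c p) * msg_vec Z 0 p) / g l 0 (rshift (m * n) l).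
    rewrite [LHS]mxE mulNr mulr_suml -sumrN; apply: eq_bigr => p _; rewrite [L p l]mxE.
    by ring.
  rewrite (eq_bigr (fun p => g l 0 (lshift c p) * msg_vec Z 0 p)) => [|p _]; last by rewrite row_mxEl.
  by field; apply: hg3.
have hU l : l \notin Fs -> u l *m phi = 0.
  move=> lF; rewrite -urow hphi -rowE; apply: zero11; rewrite mxE mxE row_mxEr.
  exact: hsupp.
have hrow j k : (row k (Bm j) *m phi) 0 0 = Z j k.
  rewrite -rowBmsg -(rowKu (mxvec_index j k) Bmsg U) rowE hphi -rowE mxE mxE row_mxEl.
  by rewrite /msg_vec mxvecE.
have hBm0 j : j \in H i -> Bm j *m phi = 0.
  move=> jH; apply/row_matrixP => k; rewrite row_mul row0; apply: zero11; rewrite hrow.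
  by move/matrixP: hside => /(_ j k); rewrite !mxE jH.
have hW : Sig V (Sset m c :|: Tset (H i) Fs) *m phi = 0.
  rewrite /Sig; apply: (big_ind (fun X : 'M[F]_d => X *m phi = 0)).
  - by rewrite mul0mx.
  - move=> X Y hX hY; apply: (sub_mul0 (G := col_mx X Y)); first by rewrite addsmxE.
    by rewrite mul_col_mx hX hY col_mx0.
  move=> k; rewrite in_setU => /orP[/imsetP[l _ ->]|].
    by apply: (sub_mul0 (G := s l)); [case: (hs l) => _ /andP[] | apply: hS].
  rewrite /Tset inE !in_setU negb_or => /andP[/andP[n1 n2] /orP[/imsetP[j _ ek]|/imsetP[l _ ek]]].
    have jH : j \in H i.
      apply: contraR n1 => jH; rewrite ek; apply: imset_f; by rewrite inE.
    rewrite ek; apply: (sub_mul0 (G := Bm j)); first by move/andP: (hBm j) => [].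
    exact: hBm0.
  have lF : l \notin Fs by apply: contra n2 => lF; rewrite ek; apply: imset_f.
  rewrite ek; apply: (sub_mul0 (G := u l)); first by case: (hu l) => _ /andP[].
  exact: hU.
have hf := sub_mul0 (hC i Fs cF) hW.
have hBf : Bm (f i) *m phi = 0.
  by apply: (sub_mul0 _ hf); move/andP: (hBm (f i)) => [].
apply/rowP => k; rewrite !mxE -hrow.
by rewrite -row_mul hBf row0 mxE.
Qed.

End TheoremHelpers.
Import TheoremHelpers.

Theorem theorem1 (F : finFieldType) (m n c N : nat)
  (f : 'I_N -> 'I_m) (H : 'I_N -> {set 'I_m}) (delta : 'I_N -> nat)
  (hH : forall i, f i \notin H i)
  (hdelta : forall i, (2 * delta i <= c)%N) :
  (exists L : 'M[F]_(m * n, c), is_vl_diff_ecic f H delta L)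
  <->
  (exists D : seq {ffun 'I_(m + (c + c)) -> nat},
     [/\ is_discrete_polymatroid D /\ dp_representable F D,
         dp_rank D setT = (m * n + c)%N,
         (* (A) *)
         [/\ forall j : 'I_m, dp_rank D [set gmsg c j] = n,
             dp_rank D (Msgs m c :|: Codes m c) = (m * n + c)%N &
             forall k : 'I_(m + (c + c)), (m <= k)%N -> dp_rank D [set k] = 1%N],
         (* (B) *)
         (forall j : 'I_c,
            dp_rank D (Msgs m c :|: [set gcode m j; gS m j])
              = dp_rank D (Msgs m c :|: [set gcode m j])
            /\ dp_rank D (Msgs m c :|: [set gcode m j])
              = dp_rank D (Msgs m c :|: [set gS m j])) &
         (* (C) *)
         (forall (i : 'I_N) (Fs : {set 'I_c}), #|Fs| = (2 * delta i)%N ->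
            dp_contract_rank D (Tset (H i) Fs) (gmsg c (f i) |: Sset m c)
              = dp_contract_rank D (Tset (H i) Fs) (Sset m c))]).
Proof.
split.
  case=> L hL.
  have [D [hpoly hrep hr]] := repr_poly (Vfw m n L).
  exists D; split => //.
  - by rewrite hr; apply: rank_full; apply: subsetT.
  - split.
    + by move=> j; rewrite hr; apply: rank_msg.
    + by rewrite hr; apply: rank_full.
    + by move=> k hk; rewrite hr; apply: rank_one.
  - by move=> j; rewrite !hr; apply: fw_B.
  - by move=> i Fs cF; rewrite /dp_contract_rank !hr (fw_C hL cF).
case=> D [[hpoly [d [V hV]]] rT [hA1 hA2 hA3] hB hC].
have hr A : \rank (Sig V A) = dp_rank D A := hV A.
have one (k : 'I_(m + (c + c))) : (m <= k)%N -> \rank (V k) = 1%N.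
  by move=> hk; rewrite -(hA3 k hk) -hr /Sig big_set1.
apply: (bw (V := V) hdelta).
- by move=> j; rewrite -(hA1 j) -hr /Sig big_set1.
- by rewrite hr hA2.
- by move=> l; apply: one => /=; lia.
- by move=> l; apply: one => /=; lia.
- move=> l; case: (hB l) => e1 e2; apply: rank_ge_sub; last by rewrite !hr e1.
  apply: Sig_mono; apply/subsetP => k; rewrite !in_setU !in_set1 => /orP[->|->] //.
  by rewrite orbT.
- move=> l; case: (hB l) => e1 e2; apply: rank_ge_sub; last by rewrite !hr e1 e2.
  apply: Sig_mono; apply/subsetP => k; rewrite !in_setU !in_set1 => /orP[->|->] //.
  by rewrite !orbT.
move=> i Fs cF; have := hC i Fs cF; rewrite /dp_contract_rank -!hr.
set T := Tset (H i) Fs.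
have m1 : (\rank (Sig V T) <= \rank (Sig V (Sset m c :|: T)))%N.
  by apply: rank_Sig_mono; apply: subsetUr.
have m2 : (\rank (Sig V (Sset m c :|: T)) <= \rank (Sig V ((gmsg c (f i) |: Sset m c) :|: T)))%N.
  by apply: rank_Sig_mono; apply/subsetP => k; rewrite !in_setU !in_set1 => /orP[->|->]; rewrite ?orbT.
move=> e.
have sub : (Sig V (Sset m c :|: T) <= Sig V ((gmsg c (f i) |: Sset m c) :|: T))%MS.
  by apply: Sig_mono; apply/subsetP => k; rewrite !in_setU !in_set1 => /orP[->|->]; rewrite ?orbT.
have er : \rank (Sig V (Sset m c :|: T)) = \rank (Sig V ((gmsg c (f i) |: Sset m c) :|: T)).
  by rewrite -(subnK (leq_trans m1 m2)) e subnK.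
have sub2 := rank_ge_sub sub er.
apply: submx_trans sub2; apply: V_Sig; by rewrite !in_setU !in_set1 eqxx.
Qed.
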